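(* Let $\mathcal{A}$ be a unital algebra over a field $F$ with $\operatorname{char}(F)\neq2$ such that $\mathcal{A}$ is generated (as an algebra) by its idempotents, i.e. $\mathcal{A}=R(\mathcal{A})$. Then $\operatorname{JCent}(\mathcal{A})=\operatorname{Cent}(\mathcal{A})$.
   Context: $R(\mathcal{A})$ denotes the subalgebra of $\mathcal{A}$ generated by all idempotents of $\mathcal{A}$. $x\circ y=xy+yx$. $\operatorname{JCent}(\mathcal{A})$: linear $f:\mathcal{A}\to\mathcal{A}$ with $f(x\circ y)=f(x)\circ y$ for all $x,y$. $\operatorname{Cent}(\mathcal{A})$: linear $f$ with $f(xy)=f(x)y=xf(y)$ for all $x,y$. *)

(* Defs.v *)
From HB Require Import structures.
From mathcomp Require Import all_boot all_order all_algebra.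
Set Implicit Arguments. Unset Strict Implicit. Unset Printing Implicit Defensive.
Import GRing.Theory.
Local Open Scope ring_scope.

Definition jprod (F : fieldType) (A : algType F) (x y : A) : A := x * y + y * x.

Definition idempotent_el (F : fieldType) (A : algType F) (e : A) : Prop := e * e = e.

Definition subalg_pred (F : fieldType) (A : algType F) (S : A -> Prop) : Prop :=
  [/\ S 0, S 1,
      (forall x y, S x -> S y -> S (x + y)),
      (forall (a : F) x, S x -> S (a *: x)) &
      (forall x y, S x -> S y -> S (x * y))].

Definition in_R (F : fieldType) (A : algType F) (x : A) : Prop :=
  forall S : A -> Prop, subalg_pred S ->
    (forall e : A, idempotent_el e -> S e) -> S x.

Definition in_JCent (F : fieldType) (A : algType F) (f : {linear A -> A}) : Prop :=
  forall x y : A, f (jprod x y) = jprod (f x) y.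

Definition in_Cent (F : fieldType) (A : algType F) (f : {linear A -> A}) : Prop :=
  forall x y : A, f (x * y) = f x * y /\ f (x * y) = x * f y.

(* Main.v *)
Require Import Defs.
From HB Require Import structures.
From mathcomp Require Import all_boot all_order all_algebra.
Import GRing.Theory.
Local Open Scope ring_scope.

Theorem proposition3p6 (F : fieldType) (A : algType F)
  (hchar : (2%:R : F) != 0)
  (hgen : forall x : A, in_R x) :
  forall f : {linear A -> A}, in_JCent f <-> in_Cent f.
Proof.
move=> f; split; last first.
  move=> hC x y; rewrite /jprod linearD.
  by have [-> _] := hC x y; have [_ ->] := hC y x.
move=> hJ.
set a := f 1.
have two0 : forall v : A, v + v = 0 -> v = 0.
  move=> v hv.
  have : (2%:R : F) *: v = 0 by rewrite scaler_nat mulr2n.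
  move/eqP; rewrite scaler_eq0 (negbTE hchar) /= => /eqP //.
have hf : forall y, f y + f y = a * y + y * a.
  move=> y; have := hJ 1 y; rewrite /jprod mul1r mulr1 linearD => -> //.
have hidem : forall e : A, e * e = e -> a * e = e * a.
  move=> e he.
  set b := f e.
  have h2 : b * e + e * b = b + b.
    have := hJ e e; rewrite /jprod he linearD -/b => <- //.
  have h3 : e * b * e = e * b.
    have := congr1 (fun z => e * z) h2.
    rewrite /= mulrDr mulrDr mulrA mulrA he => /addIr //.
  have h4 : e * b * e = b * e.
    have := congr1 (fun z => z * e) h2.
    rewrite /= mulrDl mulrDl -mulrA he => /addrI //.
  have heb : e * b = b * e by rewrite -h3 h4.
  have hb := hf e; rewrite -/b in hb.
  have h5 : e * (b + b) = (b + b) * e by rewrite mulrDr mulrDl heb.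
  move: h5; rewrite hb mulrDr mulrDl !mulrA he -!mulrA he.
  by move=> H; apply: (@addrI _ (e * (a * e))); rewrite [X in _ = X]H addrC.
have hc : forall x, a * x = x * a.
  move=> x; apply: (hgen x (fun z => a * z = z * a)) => //.
  split.
  - by rewrite mulr0 mul0r.
  - by rewrite mulr1 mul1r.
  - by move=> u v hu hv; rewrite mulrDr mulrDl hu hv.
  - by move=> c u hu; rewrite -scalerAr -scalerAl hu.
  - by move=> u v hu hv; rewrite mulrA hu -mulrA hv mulrA.
have hfa : forall x, f x = a * x.
  move=> x; apply/eqP; rewrite -subr_eq0; apply/eqP/two0.
  by rewrite addrACA -opprD hf hc subrr.
move=> x y; rewrite !hfa; split; first by rewrite mulrA.
by rewrite !mulrA hc.
Qed.
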